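(* Let $S^1=\{z\in\mathbb{C}:|z|=1\}$, $\alpha\in(0,1)$, and $f:S^1\to S^1$, $f(z)=ze^{2\pi i\alpha}$. Let $\Delta$ be the partition of $S^1$ into orbits $\{f^k(z):k\in\mathbb{Z}\}$, $Y=S^1/\Delta$ with the quotient topology, and $p:S^1\to Y$ the projection. Then $p$ has property (CONT) for every $\alpha$, and $p$ has property (COMP) if and only if $\alpha$ is rational.
   Context: A $\Delta$-map is a continuous $h:S^1\to S^1$ mapping each element of $\Delta$ into some element of $\Delta$; $\mathrm{End}(S^1,\Delta)$ is the monoid of $\Delta$-maps, $\mathrm{End}(Y)=C(Y,Y)$, and $\psi(h)$ is the unique map with $p\circ h=\psi(h)\circ p$. Property (COMP): for every compact $L\subset Y$ there is a compact $K\subset S^1$ with $p(K)=L$. Property (CONT): $\psi:\mathrm{End}(S^1,\Delta)\to\mathrm{End}(Y)$ is continuous with respect to compact open topologies. *)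

(* Defs.v *)
From HB Require Import structures.
From mathcomp Require Import all_boot all_order all_algebra generic_quotient.
From mathcomp Require Import all_classical all_reals all_analysis.
From mathcomp Require Import ring lra.
Set Implicit Arguments. Unset Strict Implicit. Unset Printing Implicit Defensive.
Import Order.TTheory GRing.Theory Num.Theory.
Import numFieldNormedType.Exports.
Local Open Scope classical_set_scope.
Local Open Scope ring_scope.

Local Open Scope quotient_scope.
Section Circle.
Context {R : realType}.

(* The plane C is modelled as R * R (product topology), z = (Re z, Im z). *)
Definition S1set : set (R * R) := [set z | z.1 ^+ 2 + z.2 ^+ 2 = 1].

Local Notation S1 := (set_type S1set).

(* multiplication by e^{i t} on C = R * R *)
Definition rot (t : R) (z : R * R) : R * R :=
  (z.1 * cos t - z.2 * sin t, z.1 * sin t + z.2 * cos t).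

Lemma rot0 z : rot 0 z = z.
Proof. by case: z => x y; rewrite /rot /= sin0 cos0 !mulr0 !mulr1 subr0 add0r. Qed.

Lemma rotD s t z : rot s (rot t z) = rot (t + s) z.
Proof.
case: z => x y; rewrite /rot /= cosD sinD; congr pair; ring.
Qed.

Definition fpow (alpha : R) (k : int) (z : R * R) : R * R :=
  rot (2 * pi * k%:~R * alpha) z.

Definition orbit_rel (alpha : R) : rel S1 :=
  fun z w => `[< exists k : int, set_val w = fpow alpha k (set_val z) >].

Lemma orbit_rel_equiv (alpha : R) : equiv_class_of (orbit_rel alpha).
Proof.
split.
- by move=> z; apply/asboolP; exists 0; rewrite /fpow mulr0z mulr0 mul0r rot0.
- suff H : forall z w, orbit_rel alpha z w -> orbit_rel alpha w z.
    by move=> z w; apply/idP/idP => /H.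
  move=> z w /asboolP [k Hk]; apply/asboolP; exists (- k).
  rewrite Hk /fpow rotD (_ : _ + _ = 0) ?rot0 //.
  by rewrite mulrNz; ring.
- move=> w z v /asboolP [k Hk] /asboolP [l Hl]; apply/asboolP; exists (k + l).
  by rewrite Hl Hk /fpow rotD mulrzDr; congr rot; ring.
Qed.

Definition orbit_equiv (alpha : R) : equiv_rel S1 :=
  EquivRelPack (orbit_rel_equiv alpha).

Local Notation Yspace alpha := (quotient_topology {eq_quot (orbit_equiv alpha)}).

Definition proj (alpha : R) : S1 -> Yspace alpha := \pi_(Yspace alpha).

Definition delta_map (alpha : R) (h : S1 -> S1) : Prop :=
  forall z w : S1, orbit_rel alpha z w -> orbit_rel alpha (h z) (h w).

Definition EndDelta (alpha : R) : set {compact-open, S1 -> S1} :=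
  [set h | continuous (h : S1 -> S1) /\ delta_map alpha h].

(* psi(h): the map Y -> Y with p o h = psi(h) o p, i.e. [y] |-> p (h (repr y)) *)
Definition psi (alpha : R) (h : {compact-open, S1 -> S1})
  : {compact-open, Yspace alpha -> Yspace alpha} :=
  fun y => proj alpha (h (repr y)).

Definition CONT (alpha : R) : Prop :=
  {within (EndDelta alpha), continuous (@psi alpha)}.

Definition COMP (alpha : R) : Prop :=
  forall L : set (Yspace alpha), compact L ->
    exists K : set S1, compact K /\ proj alpha @` K = L.

End Circle.

(* Main.v *)
Require Import Defs.
From HB Require Import structures.
From mathcomp Require Import all_boot all_order all_algebra generic_quotient.
From mathcomp Require Import all_classical all_reals all_analysis.
From mathcomp Require Import ring lra zify.
Import Order.TTheory GRing.Theory Num.Theory.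
Import numFieldNormedType.Exports.
Local Open Scope classical_set_scope.
Local Open Scope ring_scope.
Local Open Scope quotient_scope.

Section W1.
Context {R : realType}.
Local Notation S1 := (set_type (@S1set R)).
Local Notation Y alpha := (quotient_topology {eq_quot (@orbit_equiv R alpha)}).

Lemma projP alpha (z w : S1) : Defs.proj alpha z = Defs.proj alpha w <-> orbit_rel alpha z w.
Proof.
rewrite /proj; split.
  move=> h; apply/(@eqmodP _ (orbit_equiv alpha)).
  exact: h.
by move=> h; have := elimT (@eqmodP _ (orbit_equiv alpha) z w) h.
Qed.

Lemma proj_repr alpha (y : Y alpha) : Defs.proj alpha (repr y) = y.
Proof. exact: reprK. Qed.

Lemma proj_open alpha (U : set (Y alpha)) : open U <-> open (Defs.proj alpha @^-1` U).
Proof. by []. Qed.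

Lemma S1_open (U : set S1) : open U <-> exists2 A : set (R * R), open A & U = set_val @^-1` A.
Proof.
split.
  by case=> A oA <-; exists A.
by case=> A oA ->; exists A.
Qed.

End W1.

Section W2.
Context {R : realType}.
Local Notation S1 := (set_type (@S1set R)).

Lemma fst_cont : continuous (fst : R * R -> R).
Proof. move=> [x y]; exact: cvg_fst. Qed.
Lemma snd_cont : continuous (snd : R * R -> R).
Proof. move=> [x y]; exact: cvg_snd. Qed.

Lemma rot_cont t : continuous (Defs.rot t : R * R -> R * R).
Proof.
move=> z; rewrite /Defs.rot.
apply: (@cvg_pair _ _ _ (nbhs z) (nbhs _) (nbhs _)).
- apply: cvgB; apply: cvgM; (try exact: cvg_cst).
  + exact: fst_cont.
  + exact: snd_cont.
- apply: cvgD; apply: cvgM; (try exact: cvg_cst).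
  + exact: fst_cont.
  + exact: snd_cont.
Qed.


Lemma rot_S1 t (z : R * R) : S1set z -> S1set (Defs.rot t z).
Proof.
case: z => x y; rewrite /S1set /Defs.rot /= => h.
have h2 := cos2Dsin2 t.
transitivity ((x ^+ 2 + y ^+ 2) * (cos t ^+ 2 + sin t ^+ 2)); first ring.
by rewrite h h2 mulr1.
Qed.

Definition rotS t (z : S1) : S1 :=
  exist _ (Defs.rot t (val z)) (mem_set (@rot_S1 t (val z) (set_mem (valP z)))).

Lemma rotS_val t z : val (rotS t z) = Defs.rot t (val z).
Proof. by []. Qed.

Lemma rotSD s t z : rotS s (rotS t z) = rotS (t + s) z.
Proof. by apply: val_inj; rewrite /= Defs.rotD. Qed.

Lemma rotS0 z : rotS 0 z = z.
Proof. by apply: val_inj; rewrite /= Defs.rot0. Qed.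

Lemma rotSN t z : rotS (- t) (rotS t z) = z.
Proof. by rewrite rotSD subrr rotS0. Qed.

Lemma rot_2pi (z : R * R) : Defs.rot (2 * pi) z = z.
Proof.
have -> : (2 : R) * pi = pi *+ 2 by rewrite mulr_natl.
by case: z => x y; rewrite /Defs.rot /= cos2pi sin2pi !mulr0 !mulr1 subr0 add0r.
Qed.

Lemma rotS_nat (n : nat) z : rotS (2 * pi * n%:R) z = z.
Proof.
elim: n => [|n IH]; first by rewrite mulr0 rotS0.
have -> : 2 * pi * (n.+1)%:R = 2 * pi * n%:R + 2 * pi :> R.
  by rewrite -addn1 natrD; ring.
by rewrite -rotSD IH; apply: val_inj; exact: rot_2pi.
Qed.

Lemma rotS_int (n : int) z : rotS (2 * pi * n%:~R) z = z.
Proof.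
case: n => n.
  by rewrite /= -[RHS](rotS_nat n).
rewrite NegzE mulrNz mulrN.
by rewrite -{1}(rotS_nat n.+1 z) rotSN.
Qed.

Lemma rotS_cont t : continuous (rotS t).
Proof.
apply: (@continuous_comp_initial _ _ _ (@set_val _ (@S1set R)) (rotS t : S1 -> initial_topology set_val)).
move=> z.
have := @continuous_comp (initial_topology (@set_val _ (@S1set R))) _ _ set_val (Defs.rot t) z
  (@initial_continuous _ _ _ z) (rot_cont t _).
exact.
Qed.

Lemma orbitP alpha (z w : S1) :
  orbit_rel alpha z w <-> exists k : int, w = rotS (2 * pi * k%:~R * alpha) z.
Proof.
split.
  by move=> /asboolP [k hk]; exists k; apply: val_inj.
by move=> [k ->]; apply/asboolP; exists k.
Qed.


Lemma pt_S1 : @S1set R (1, 0).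
Proof. by rewrite /S1set /= expr1n expr0n addr0. Qed.

Definition ptS : S1 := exist _ (1, 0) (mem_set pt_S1).

Definition eS (t : R) : S1 := rotS (2 * pi * t) ptS.

Lemma eS_val t : val (eS t) = (cos (2 * pi * t), sin (2 * pi * t)).
Proof. by rewrite /= /Defs.rot /= !mul1r !mul0r subr0 addr0. Qed.

Lemma rotS_eS a t : rotS (2 * pi * a) (eS t) = eS (t + a).
Proof. by rewrite /eS rotSD; congr rotS; ring. Qed.

Lemma eS_int t (j : int) : eS (t + j%:~R) = eS t.
Proof. by rewrite -rotS_eS rotS_int. Qed.

Lemma eS_cont : continuous eS.
Proof.
apply: (@continuous_comp_initial _ _ _ (@set_val _ (@S1set R)) (eS : R -> initial_topology set_val)).
move=> t.
have -> : set_val \o (eS : R -> initial_topology set_val) =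
   (fun t => (cos (2 * pi * t), sin (2 * pi * t))).
  by apply: funext => u; rewrite /= -eS_val.
apply: (@cvg_pair _ _ _ (nbhs t) (nbhs _) (nbhs _)).
- apply: (@continuous_comp _ _ _ (fun u => 2 * pi * u) cos).
    by apply: cvgM; [exact: cvg_cst | exact: cvg_id].
  exact: continuous_cos.
- apply: (@continuous_comp _ _ _ (fun u => 2 * pi * u) sin).
    by apply: cvgM; [exact: cvg_cst | exact: cvg_id].
  exact: continuous_sin.
Qed.

Lemma eS_inj_small t s : 0 < t - s < 1 / 2 -> eS t <> eS s.
Proof.
move=> /andP [h1 h2] he.
have hv := congr1 val he; rewrite !eS_val in hv; case: hv => hc hs.
have hcos : cos (2 * pi * t - 2 * pi * s) = 1.
  by rewrite cosB hc hs -!expr2 cos2Dsin2.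
have hsin : sin (2 * pi * t - 2 * pi * s) = 0.
  have := cos2Dsin2 (2 * pi * t - 2 * pi * s); rewrite hcos expr1n.
  by move=> h; apply/eqP; rewrite -sqrf_eq0; apply/eqP; lra.
have : 0 < sin (2 * pi * t - 2 * pi * s).
  apply: sin_gt0_pi; rewrite -mulrBr; apply/andP; split.
    by apply: mulr_gt0 => //; apply: mulr_gt0 => //; exact: pi_gt0.
  have hp := pi_gt0 R.
  nra.
by rewrite hsin ltxx.
Qed.

Lemma orbit_pt alpha (w : S1) :
  orbit_rel alpha ptS w <-> exists k : int, w = eS (k%:~R * alpha).
Proof.
rewrite orbitP; split=> -[k ->]; exists k; by rewrite /eS mulrA.
Qed.

End W2.

Section W3.
Context {R : realType}.

Definition Gset (alpha : R) : set R :=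
  [set g | exists k j : int, g = k%:~R * alpha + j%:~R].

Lemma G_sub alpha g h : Gset alpha g -> Gset alpha h -> Gset alpha (g - h).
Proof.
move=> [k [j ->]] [k' [j' ->]]; exists (k - k'), (j - j').
by rewrite !intrB; ring.
Qed.

Lemma G_mul alpha (m : int) g : Gset alpha g -> Gset alpha (m%:~R * g).
Proof.
move=> [k [j ->]]; exists (m * k), (m * j).
by rewrite !intrM; ring.
Qed.

Lemma G1 alpha : Gset alpha 1.
Proof. by exists 0, 1; rewrite mul0r add0r. Qed.

Lemma Galpha alpha : Gset alpha alpha.
Proof. by exists 1, 0; rewrite mul1r addr0. Qed.

Lemma small_elt alpha : (forall q : rat, alpha <> ratr q) ->
  forall eps, 0 < eps -> exists2 d, Gset alpha d & 0 < d < eps.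
Proof.
move=> irr eps0 eps0_gt0.
apply: contrapT => hno.
have hno' : forall g, Gset alpha g -> 0 < g -> eps0 <= g.
  move=> g Gg g0; rewrite leNgt; apply/negP => ge; apply: hno; exists g => //.
  exact/andP.
pose S := [set g | Gset alpha g /\ 0 < g].
have S1 : S 1 by split => //; exact: G1.
have hinf : has_inf S.
  by split; [exists 1 | exists 0 => g [] _ /ltW].
have [s1 [Gs1 s1_gt0] s1lt] := inf_adherent eps0_gt0 hinf.
have gen : forall g, Gset alpha g -> exists m : int, g = m%:~R * s1.
  move=> g Gg; exists (Num.floor (g / s1)).
  set m := Num.floor (g / s1).
  have hm1 : m%:~R <= g / s1 := real_floor_le (num_real _).
  have hm2 : g / s1 < (m + 1)%:~R := real_floorD1_gt (num_real _).
  rewrite ler_pdivlMr // in hm1.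
  rewrite ltr_pdivrMr // intrD mulrDl mul1r in hm2.
  have Gr : Gset alpha (g - m%:~R * s1) by apply: G_sub => //; exact: G_mul.
  have [r0|rpos] := eqVneq (g - m%:~R * s1) 0.
    by apply/eqP; rewrite -subr_eq0 r0.
  have rgt0 : 0 < g - m%:~R * s1 by rewrite lt_neqAle eq_sym rpos /= subr_ge0.
  have Sr : S (g - m%:~R * s1) by [].
  have hl := ge_inf (proj2 hinf) Sr.
  have Gd : Gset alpha (s1 - (g - m%:~R * s1)) by exact: G_sub.
  have := hno' _ Gd.
  lra.
have [m1 h1] := gen 1 (G1 alpha).
have [m2 h2] := gen alpha (Galpha alpha).
have m1n0 : (m1%:~R : R) != 0.
  by apply/eqP => h; move: h1; rewrite h mul0r; apply/eqP; exact: oner_neq0.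
apply: (irr ((m2%:~R : rat) / m1%:~R)).
rewrite fmorph_div !rmorph_int.
have hs : s1 = (m1%:~R)^-1 by apply: (mulfI m1n0); rewrite mulfV // -h1.
by rewrite h2 hs.
Qed.

Lemma dense_G alpha : (forall q : rat, alpha <> ratr q) ->
  forall x eps, 0 < eps -> exists2 g, Gset alpha g & `|g - x| < eps.
Proof.
move=> irr x eps eps0.
have [d Gd /andP [d0 deps]] := @small_elt alpha irr eps eps0.
set m := Num.floor (x / d).
have hm1 : m%:~R <= x / d := real_floor_le (num_real _).
have hm2 : x / d < (m + 1)%:~R := real_floorD1_gt (num_real _).
rewrite ler_pdivlMr // in hm1.
rewrite ltr_pdivrMr // intrD mulrDl mul1r in hm2.
exists (m%:~R * d); first exact: G_mul.
rewrite ler0_norm; lra.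
Qed.

End W3.

Section W4.
Context {R : realType}.
Local Notation S1 := (set_type (@S1set R)).
Local Notation Y alpha := (quotient_topology {eq_quot (@orbit_equiv R alpha)}).

Lemma angle (z : S1) : exists t, z = eS t.
Proof.
case: z => -[c s] hz.
have h := set_mem hz; rewrite /S1set /= in h.
have hc : -1 <= c <= 1 by apply/andP; split; nra.
have hpi := pi_gt0 R.
have hcos : cos (acos c) = c by apply: acosK; rewrite in_itv /= hc.
have hsin := sin_acos hc.
have hsq : Num.sqrt (1 - c ^+ 2) = `|s|.
  by rewrite -sqrtr_sqr; congr Num.sqrt; lra.
have [s0|s0] := leP 0 s.
  exists (acos c / (2 * pi)); apply: val_inj; rewrite eS_val /=.
  have -> : 2 * pi * (acos c / (2 * pi)) = acos c by rewrite mulrC divfK // gt_eqF // mulr_gt0.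
  by rewrite hcos hsin hsq ger0_norm.
exists (- acos c / (2 * pi)); apply: val_inj; rewrite eS_val /=.
have -> : 2 * pi * (- acos c / (2 * pi)) = - acos c by rewrite mulrC divfK // gt_eqF // mulr_gt0.
by rewrite cosN sinN hcos // hsin hsq ltr0_norm // opprK.
Qed.


Lemma orbit_eS (alpha t : R) (k : int) : orbit_rel alpha (eS t) (eS (t + k%:~R * alpha)).
Proof. by apply/orbitP; exists k; rewrite -mulrA rotS_eS. Qed.

Lemma Y_all alpha : (forall q : rat, alpha <> ratr q) ->
  forall U : set (Y alpha), open U -> U !=set0 -> forall w, U (Defs.proj alpha w).
Proof.
move=> irr U oU [y Uy] w.
have oV : open (Defs.proj alpha @^-1` U) by exact: oU.
have [t0 ht0] := angle (repr y).
have Vt0 : (Defs.proj alpha @^-1` U) (eS t0) by rewrite /= -ht0 proj_repr.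
have : nbhs t0 (eS @^-1` (Defs.proj alpha @^-1` U)).
  by apply: eS_cont; exact: open_nbhs_nbhs.
move=> /nbhs_ballP [del del0 hdel].
have [tw ->] := angle w.
have [g [k [j ->]] hg] := @dense_G R alpha irr (t0 - tw) del del0.
have hV : (Defs.proj alpha @^-1` U) (eS (tw + (k%:~R * alpha + j%:~R))).
  apply: hdel; rewrite /ball /=.
  have -> : t0 - (tw + (k%:~R * alpha + j%:~R)) = - (k%:~R * alpha + j%:~R - (t0 - tw)) by ring.
  by rewrite normrN.
move: hV; rewrite /= addrA eS_int.
by have /projP -> := orbit_eS alpha tw k.
Qed.

Lemma Y_trivial alpha : (forall q : rat, alpha <> ratr q) ->
  forall U : set (Y alpha), open U -> U = set0 \/ U = setT.
Proof.
move=> irr U oU.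
have [->|hne] := pselect (U = set0); first by left.
right; apply/seteqP; split => // y _.
rewrite -(@proj_repr R alpha y); apply: Y_all => //.
by apply/set0P/eqP.
Qed.

End W4.

Section W5.
Context {R : realType}.
Local Notation S1 := (set_type (@S1set R)).
Local Notation Y alpha := (quotient_topology {eq_quot (@orbit_equiv R alpha)}).

Lemma CONT_of (alpha : R) :
  (forall h : {compact-open, S1 -> S1}, EndDelta alpha h ->
    forall (K : set (Y alpha)) (O : set (Y alpha)), compact K -> open O ->
    @psi R alpha h @` K `<=` O ->
    nbhs h [set g | @psi R alpha g @` K `<=` O]) -> CONT alpha.
Proof.
move=> H; apply: continuous_in_subspaceT => h /set_mem hA.
have FF : Filter (@psi R alpha @ (nbhs h)) by exact: fmap_filter.
apply/(compact_open_cvgP _ FF) => K O cK oO hKO.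
exact: H.
Qed.

Lemma CONT_irr (alpha : R) : (forall q : rat, alpha <> ratr q) -> CONT alpha.
Proof.
move=> irr; apply: CONT_of => h hA K O cK oO hKO.
have [hO0|hOT] := @Y_trivial R alpha irr O oO.
  have K0 : K = set0.
    apply/seteqP; split => // y Ky.
    have : O (@psi R alpha h y) by apply: hKO; exists y.
    by rewrite hO0.
  apply: (filterS _ (@filterT _ (nbhs h) _)) => g _.
  by rewrite K0 => z [y].
apply: (filterS _ (@filterT _ (nbhs h) _)) => g _.
by rewrite hOT.
Qed.

Lemma CONT_rat (alpha : R) :
  (forall L : set (Y alpha), compact L -> compact (Defs.proj alpha @^-1` L)) ->
  CONT alpha.
Proof.
move=> Hpre; apply: CONT_of => h [hc hd] K O cK oO hKO.
have cK' := Hpre K cK.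
have oO' : open (Defs.proj alpha @^-1` O) by exact: oO.
have : nbhs h [set g : {compact-open, S1 -> S1} | g @` (Defs.proj alpha @^-1` K) `<=` Defs.proj alpha @^-1` O].
  apply: open_nbhs_nbhs; split; first exact: compact_open_open.
  move=> _ [z Kz <-] /=.
  have hr : orbit_rel alpha (repr (Defs.proj alpha z)) z.
    by apply/projP; rewrite proj_repr.
  have /projP <- := hd _ _ hr.
  by apply: hKO; exists (Defs.proj alpha z).
apply: filterS => g hg _ [y Ky <-].
have : (Defs.proj alpha @^-1` O) (g (repr y)).
  by apply: hg; exists (repr y) => //; rewrite /= proj_repr.
by [].
Qed.

End W5.

Section W6.
Context {R : realType}.
Local Notation S1 := (set_type (@S1set R)).
Local Notation Y alpha := (quotient_topology {eq_quot (@orbit_equiv R alpha)}).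

Definition rk (alpha : R) (k : int) (z : S1) : S1 := rotS (2 * pi * k%:~R * alpha) z.

Lemma rkD alpha k m z : rk alpha k (rk alpha m z) = rk alpha (k + m) z.
Proof. by rewrite /rk rotSD intrD; congr rotS; ring. Qed.

Lemma rk0 alpha z : rk alpha 0 z = z.
Proof. by rewrite /rk mulr0 mul0r rotS0. Qed.

Lemma rk_cont alpha k : continuous (rk alpha k).
Proof. exact: rotS_cont. Qed.

Lemma orbit_rk alpha (z w : S1) : orbit_rel alpha z w <-> exists k, w = rk alpha k z.
Proof. exact: orbitP. Qed.

Lemma fin_open (T : topologicalType) (P : nat -> set T) (m : nat) :
  (forall j, open (P j)) -> open [set z | forall j, (j < m)%N -> P j z].
Proof.
move=> oP; elim: m => [|m IH].
  have -> : [set z : T | forall j, (j < 0)%N -> P j z] = setT.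
    by apply/seteqP; split => // z _ j.
  exact: openT.
have -> : [set z | forall j, (j < m.+1)%N -> P j z] =
    [set z | forall j, (j < m)%N -> P j z] `&` P m.
  apply/seteqP; split => z.
    by move=> h; split; [move=> j hj; apply: h; lia | apply: h].
  by move=> [h1 h2] j; rewrite ltnS leq_eqVlt => /orP [/eqP ->|/h1].
exact: openI.
Qed.

Lemma fin_filter (T : Type) (F : set_system T) (FF : Filter F) (P : nat -> set T) (m : nat) :
  (forall j, (j < m)%N -> F (P j)) -> F [set z | forall j, (j < m)%N -> P j z].
Proof.
elim: m => [|m IH] hP.
  by apply: filterS (@filterT _ F _) => z _ j.
have : F ([set z | forall j, (j < m)%N -> P j z] `&` P m).
  apply: filterI; first by apply: IH => j hj; apply: hP; lia.
  exact: hP.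
apply: filterS => z [h1 h2] j; rewrite ltnS leq_eqVlt => /orP [/eqP ->|/h1] //.
Qed.

Section Rat.
Variables (alpha : R) (q : rat).
Hypothesis hq : alpha = ratr q.

Let d : int := denq q.
Let n : int := numq q.

Lemma d_alpha : d%:~R * alpha = n%:~R.
Proof.
have := congr1 (@ratr R) (numqE q).
rewrite rmorphM !rmorph_int => h; by rewrite /d /n h hq mulrC.
Qed.

Lemma rk_period k m z : rk alpha (k + m * d) z = rk alpha k z.
Proof.
rewrite /rk.
have -> : 2 * pi * (k + m * d)%:~R * alpha = 2 * pi * k%:~R * alpha + 2 * pi * (m * n)%:~R.
  by rewrite !intrD !intrM -d_alpha; ring.
by rewrite -rotSD rotS_int.
Qed.

Let dn : nat := `|d|%N.

Lemma dn_gt0 : (0 < dn)%N.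
Proof. by rewrite absz_gt0 /d gt_eqF // denq_gt0. Qed.

Lemma d_dn : d = dn%:Z.
Proof. by rewrite /dn gez0_abs // ltW // denq_gt0. Qed.

Lemma rk_mod k z : exists2 j : nat, (j < dn)%N & rk alpha k z = rk alpha j%:Z z.
Proof.
have dn0 : d != 0 by rewrite gt_eqF // denq_gt0.
exists `|(k %% d)%Z|%N.
  have := ltz_mod k dn0; have := modz_ge0 k dn0; rewrite /dn; lia.
rewrite gez0_abs ?modz_ge0 //.
by rewrite {1}(divz_eq k d) addrC rk_period.
Qed.

Lemma pre_compact (L : set (Y alpha)) : compact L -> compact (Defs.proj alpha @^-1` L).
Proof.
move=> cL F PF FL.
have PG : ProperFilter (Defs.proj alpha @ F) by exact: fmap_proper_filter.
have [y [Ly cy]] := cL _ PG FL.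
apply: contrapT => hno.
pose z0 := repr y.
have prk : forall k, Defs.proj alpha (rk alpha k z0) = y.
  move=> k; rewrite -[RHS](@proj_repr R alpha y); symmetry; apply/projP.
  by apply/orbit_rk; exists k.
have bad : forall j : nat, exists B : set S1, open B /\ (B (rk alpha j%:Z z0) /\ F (~` B)).
  move=> j; apply: contrapT => hj; apply: hno.
  exists (rk alpha j%:Z z0); split; first by rewrite /= prk.
  move=> A B FA; rewrite nbhsE => -[B' [oB' B'z] B'B].
  apply: contrapT => hAB.
  apply: hj; exists B'; split => //; split => //.
  apply: filterS FA => a Aa B'a; apply: hAB; exists a; split => //; exact: B'B.
have [Bf hBf] := choice bad.
pose W := [set x | exists2 j, (j < dn)%N & Bf j x].
have oW : open W.
  have -> : W = \bigcup_(j in [set j | (j < dn)%N]) Bf j by [].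
  by apply: bigcup_open => j _; exact: (hBf j).1.
pose V := [set z | forall k, (k < dn)%N -> W (rk alpha k%:Z z)].
have oV : open V.
  apply: fin_open => k.
  exact: (proj1 (continuousP _) (rk_cont alpha k%:Z) W oW).
have Vz0 : V z0 by move=> k hk; exists k => //; exact: (hBf k).2.1.
have VW : V `<=` W by move=> z Vz; have := Vz 0%N dn_gt0; rewrite rk0.
have FnW : F (~` W).
  have : F [set x | forall j, (j < dn)%N -> (~` Bf j) x].
    by apply: fin_filter => j _; exact: (hBf j).2.2.
  by apply: filterS => x hx [j hj Bx]; exact: hx j hj Bx.
have satV : forall z w, V z -> orbit_rel alpha z w -> V w.
  move=> z w Vz /orbit_rk [m ->] k hk.
  rewrite rkD; have [j hj ->] := rk_mod (k%:Z + m) z.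
  exact: Vz.
have oPV : open (Defs.proj alpha @` V : set (Y alpha)).
  apply/proj_open.
  have -> : Defs.proj alpha @^-1` (Defs.proj alpha @` V) = V.
    apply/seteqP; split => w; last by move=> Vw; exists w.
    by move=> [v Vv /projP hvw]; exact: satV Vv hvw.
  exact: oV.
have FA : F (Defs.proj alpha @^-1` (Defs.proj alpha @` (~` W))).
  by apply: filterS FnW => x nWx; exists x.
have NB : nbhs y (Defs.proj alpha @` V).
  apply: open_nbhs_nbhs; split => //; exists z0 => //; exact: proj_repr.
have := cy (Defs.proj alpha @` (~` W)) (Defs.proj alpha @` V) FA NB.
move=> [_ [[w nWw <-] [v Vv /projP hvw]]].
apply: nWw; apply: VW; exact: satV Vv hvw.
Qed.

End Rat.

End W6.

Section W7.
Context {R : realType}.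
Local Notation S1 := (set_type (@S1set R)).
Local Notation Y alpha := (quotient_topology {eq_quot (@orbit_equiv R alpha)}).

Lemma COMP_rat (alpha : R) (q : rat) : alpha = ratr q -> COMP alpha.
Proof.
move=> hq L cL; exists (Defs.proj alpha @^-1` L); split.
  exact: (@pre_compact R alpha q hq).
apply/seteqP; split; first by move=> _ [z Lz <-].
by move=> y Ly; exists (repr y); rewrite /= proj_repr.
Qed.

Definition RR : topologicalType := (R * R)%type.

Lemma closed_pre (K : set S1) (f : R -> S1) : continuous f -> compact K ->
  closed (f @^-1` K).
Proof.
move=> cf cK.
have cs : continuous (@set_val _ (@S1set R) : S1 -> RR).
  exact: initial_continuous.
have cK' : compact (set_val @` K : set RR).
  by apply: continuous_compact => //; exact: continuous_subspaceT.
have clK' : closed (set_val @` K : set RR).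
  by apply: compact_closed => //; exact: norm_hausdorff.
have cf' : continuous ((@set_val _ (@S1set R) : S1 -> RR) \o f).
  by move=> x; apply: continuous_comp; [exact: cf | exact: cs].
have := (proj1 (continuous_closedP _) cf') _ clK'.
have -> : ((@set_val _ (@S1set R) : S1 -> RR) \o f) @^-1` (set_val @` K) = f @^-1` K.
  apply/seteqP; split => t /=; last by move=> Kt; exists (f t).
  by move=> [z Kz /val_inj <-].
by [].
Qed.

Definition zi (n : nat) : int := if odd n then Negz n./2 else Posz n./2.

Lemma zi_surj (k : int) : exists n, zi n = k.
Proof.
case: k => m.
  by exists m.*2; rewrite /zi odd_double doubleK.
by exists m.*2.+1; rewrite /zi /= odd_double /= uphalf_double.
Qed.

End W7.

Section W8.
Context {R : realType}.
Local Notation S1 := (set_type (@S1set R)).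
Local Notation Y alpha := (quotient_topology {eq_quot (@orbit_equiv R alpha)}).

Lemma COMP_irr (alpha : R) : (forall q : rat, alpha <> ratr q) -> ~ COMP alpha.
Proof.
move=> irr hC.
pose L : set (Y alpha) := [set y | y <> Defs.proj alpha ptS].
have cL : compact L.
  move=> G PG GL.
  have [y Ly] := filter_ex GL.
  exists y; split => // A B GA; rewrite nbhsE => -[Op [oO Oy] OB].
  have [hO0|hOT] := @Y_trivial R alpha irr Op oO; first by rewrite hO0 in Oy.
  have [a Aa] := filter_ex GA.
  by exists a; split => //; apply: OB; rewrite hOT.
have [K [cK hK]] := hC L cL.
have KnO : forall z, K z -> Defs.proj alpha z <> Defs.proj alpha ptS.
  move=> z Kz; have : L (Defs.proj alpha z) by rewrite -hK; exists z.
  by [].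
pose C (k : int) := [set t : R | K (eS (t + k%:~R * alpha))].
pose D (k : int) := [set t : R | [set eS (k%:~R * alpha)] (eS t)].
have clC : forall k, closed (C k).
  move=> k; apply: (@closed_pre R K (fun t => eS (t + k%:~R * alpha))) => //.
  move=> t; apply: continuous_comp; last exact: eS_cont.
  by apply: cvgD; [exact: cvg_id | exact: cvg_cst].
have clD : forall k, closed (D k).
  by move=> k; apply: closed_pre; [exact: eS_cont | exact: compact_set1].
have cover : forall t, exists k, C k t \/ D k t.
  move=> t.
  have [hp|hp] := pselect (Defs.proj alpha (eS t) = Defs.proj alpha ptS).
    have : orbit_rel alpha ptS (eS t) by apply/projP.
    by move=> /orbit_pt [k hk]; exists k; right.
  have : L (Defs.proj alpha (eS t)) by [].
  rewrite -hK => -[w Kw hw].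
  have : orbit_rel alpha (eS t) w by apply/projP.
  move=> /orbitP [k hk]; exists k; left.
  by rewrite /C /= -rotS_eS mulrA -hk.
have dense_nC : forall k (O : set R), open O -> O !=set0 -> exists t, O t /\ ~ C k t.
  move=> k O oO [t1 Ot1].
  have : nbhs t1 O by apply: open_nbhs_nbhs.
  move=> /nbhs_ballP [del del0 hdel].
  have [g [m [j ->]] hg] := @dense_G R alpha irr (t1 + k%:~R * alpha) del del0.
  exists (m%:~R * alpha + j%:~R - k%:~R * alpha); split.
    apply: hdel; rewrite /ball /=.
    have -> : t1 - (m%:~R * alpha + j%:~R - k%:~R * alpha) =
       - (m%:~R * alpha + j%:~R - (t1 + k%:~R * alpha)) by ring.
    by rewrite normrN.
  rewrite /C /=.
  have -> : m%:~R * alpha + j%:~R - k%:~R * alpha + k%:~R * alpha =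
     m%:~R * alpha + j%:~R by ring.
  rewrite eS_int => Kz.
  apply: (KnO _ Kz); symmetry; apply/projP; apply/orbit_pt; by exists m.
have dense_nD : forall k (O : set R), open O -> O !=set0 -> exists t, O t /\ ~ D k t.
  move=> k O oO [t0 Ot0].
  have [D0|nD] := pselect (D k t0); last by exists t0.
  have : nbhs t0 O by apply: open_nbhs_nbhs.
  move=> /nbhs_ballP [del del0 hdel].
  pose e := Num.min del (1 / 2) / 2.
  have hmin0 : 0 < Num.min del (1 / 2) by rewrite lt_min del0 /=; lra.
  have hmin1 : Num.min del (1 / 2) <= del by rewrite ge_min lexx.
  have hmin2 : Num.min del (1 / 2) <= 1 / 2 by rewrite ge_min lexx orbT.
  exists (t0 + e); split.
    apply: hdel; rewrite /ball /=.
    have -> : t0 - (t0 + e) = - e by ring.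
    rewrite normrN ger0_norm /e; lra.
  rewrite /D /= => he.
  apply: (@eS_inj_small R (t0 + e) t0).
    apply/andP; split; rewrite /e; lra.
  by rewrite he D0.
pose F (n : nat) := ~` (C (zi n) `|` D (zi n)).
have hF : forall n, open (F n) /\ dense (F n).
  move=> n; split.
    by rewrite openC; apply: closedU.
  move=> O [t Ot] oO.
  have [t' [Ot' nDt']] := dense_nD (zi n) O oO (ex_intro _ t Ot).
  have oO' : open (O `&` ~` D (zi n)) by apply: openI => //; rewrite openC.
  have [t'' [[Ot'' nDt''] nCt'']] := dense_nC (zi n) _ oO' (ex_intro _ t' (conj Ot' nDt')).
  by exists t''; split => // -[].
have := @Baire R R F hF setT (ex_intro _ 0 I) openT.
move=> [t [_ ht]].
have [k [hk|hk]] := cover t.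
  have [n hn] := zi_surj k.
  by apply: (ht n I); left; rewrite hn.
have [n hn] := zi_surj k.
by apply: (ht n I); right; rewrite hn.
Qed.

End W8.


Theorem mainTheorem11 (R : realType) (alpha : R) :
  0 < alpha < 1 ->
  CONT alpha /\ (COMP alpha <-> exists q : rat, alpha = ratr q).
Proof.
move=> _.
have [[q hq]|hirr] := pselect (exists q : rat, alpha = ratr q).
  split; first by apply: CONT_rat => L cL; exact: (@pre_compact R alpha q hq L cL).
  by split => _; [exists q | exact: (@COMP_rat R alpha q hq)].
have irr : forall q : rat, alpha <> ratr q by move=> q hq; apply: hirr; exists q.
split; first exact: (@CONT_irr R alpha irr).
by split => // hC; exfalso; exact: (@COMP_irr R alpha irr hC).
Qed.
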